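(* Let $S$ be an additively cancellative centrally essential semiring without non-zero zero-divisors, and let $D(S)$ be its ring of differences. If the ring $D(S)$ has no non-zero zero-divisors, then $S$ is commutative.
   Context: A semiring is a set $S$ with two binary operations $+$ and $\cdot$ such that $(S,+)$ is a commutative monoid with neutral element $0$, $(S,\cdot)$ is a monoid with identity $1$, multiplication distributes over addition on both sides, and $0s=s0=0$ for all $s\in S$. The center is $C(S)=\{s\in S: ss'=s's \text{ for all } s'\in S\}$. $S$ is centrally essential if for every non-zero $x\in S$ there exist non-zero $y,z\in C(S)$ with $xy=z$. $S$ is additively cancellative if $x+z=y+z$ implies $x=y$; such $S$ embeds as a subsemiring in a ring $D(S)$ (ring of differences) in which every element is $x-y$ with $x,y\in S$. An element $a$ is a zero-divisor if $ab=0$ or $ba=0$ for some non-zero $b$. *)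

(* Defs.v *)
From HB Require Import structures.
From mathcomp Require Import all_boot all_algebra.
Set Implicit Arguments. Unset Strict Implicit. Unset Printing Implicit Defensive.
Import GRing.Theory.
Local Open Scope ring_scope.

(* Semirings: MathComp's pzSemiRingType = commutative additive monoid,
   multiplicative monoid, two-sided distributivity, 0 absorbing. *)

Definition in_center (S : pzSemiRingType) (s : S) : Prop :=
  forall s' : S, s * s' = s' * s.

Definition centrally_essential (S : pzSemiRingType) : Prop :=
  forall x : S, x <> 0 ->
    exists y z : S, [/\ y <> 0, z <> 0, in_center y, in_center z & x * y = z].

Definition additively_cancellative (S : pzSemiRingType) : Prop :=
  forall x y z : S, x + z = y + z -> x = y.

Definition zero_divisor (S : pzSemiRingType) (a : S) : Prop :=
  exists b : S, b <> 0 /\ (a * b = 0 \/ b * a = 0).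

Definition no_nonzero_zero_divisors (S : pzSemiRingType) : Prop :=
  forall a : S, a <> 0 -> ~ zero_divisor a.

Definition ring_of_differences (S : pzSemiRingType) (R : pzRingType)
  (f : {rmorphism S -> R}) : Prop :=
  injective f /\ forall r : R, exists x y : S, r = f x - f y.

(* Main.v *)
Require Import Defs.
From HB Require Import structures.
From mathcomp Require Import all_boot all_algebra.
Local Open Scope ring_scope.
Import GRing.Theory.

Theorem proposition2p8 (S : pzSemiRingType) (R : pzRingType)
  (f : {rmorphism S -> R}) :
  additively_cancellative S ->
  centrally_essential S ->
  no_nonzero_zero_divisors S ->
  ring_of_differences f ->
  no_nonzero_zero_divisors R ->
  forall x y : S, x * y = y * x.
Proof.
move=> _ hce _ hd hR x w; have [finj _] := hd.
have [->|x0] := eqVneq x 0; first by rewrite mul0r mulr0.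
have [y [z [y0 z0 cy cz exy]]] := hce x (elimN eqP x0).
have e : (x * w) * y = (w * x) * y.
  by rewrite -mulrA -cy mulrA exy cz -exy mulrA.
apply: (finj); apply/eqP; rewrite -subr_eq0.
case: (eqVneq (f (x * w) - f (w * x)) 0) => // ha; exfalso; apply: (hR _ (elimN eqP ha)).
exists (f y); split.
  by move=> fy; apply: y0; apply: (finj); rewrite fy rmorph0.
by left; rewrite mulrBl -!rmorphM e subrr.

Qed.
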